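(* Let the weights be $a_j=1/j$. (i) For fixed $n\ge1$ and $k\to\infty$, $k-S_{n,k}$ converges in distribution to $D_n=B_1+B_2+\cdots+B_n$, where $B_j$ are independent Bernoulli random variables with $\mathbb P\{B_j=1\}=1/j$; the law of $D_n$ is $\mathbb P\{D_n=\ell\}=\zeta_{n-1}(\{1\}_{\ell-1})/n$ for $1\le\ell\le n$. (ii) For fixed $k\ge1$ and $n\to\infty$, $S_{n,k}\to0$ in distribution.
   Context: For $\vec\ell=(\ell_1,\dots,\ell_k)$ with $n\ge\ell_1\ge\cdots\ge\ell_k\ge1$ let $\sigma(\vec\ell)=|\{1\le j\le k-1:\ell_j=\ell_{j+1}\}|$, and $\theta_{n;k}(t)=\sum_{n\ge\ell_1\ge\cdots\ge\ell_k\ge1}t^{\sigma(\vec\ell)}\prod_i\ell_i^{-1}$. $S_{n,k}$ is the random variable with $\mathbb P\{S_{n,k}=j\}=[t^j]\theta_{n;k}(t)/\theta_{n;k}(1)$. $\zeta_{m}(\{1\}_r)=\sum_{m\ge\ell_1>\cdots>\ell_r\ge1}\prod_i\ell_i^{-1}$, with $\zeta_m(\{1\}_0)=1$ (also for $m=0$). *)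

(* Defs.v *)
From Stdlib Require Import Reals Arith List.
Import ListNotations.
Open Scope R_scope.

Fixpoint tuples (n k : nat) : list (list nat) :=
  match k with
  | O => [ [] ]
  | S k' => flat_map (fun l => map (fun a => a :: l) (seq 1 n)) (tuples n k')
  end.

Fixpoint nonincb (l : list nat) : bool :=
  match l with
  | x :: ((y :: _) as t) => Nat.leb y x && nonincb t
  | _ => true
  end.

Fixpoint decb (l : list nat) : bool :=
  match l with
  | x :: ((y :: _) as t) => Nat.ltb y x && decb t
  | _ => true
  end.

Fixpoint sigma (l : list nat) : nat :=
  match l with
  | x :: ((y :: _) as t) => (if Nat.eqb x y then 1 else 0) + sigma t
  | _ => 0
  end.

Definition weight (l : list nat) : R :=
  fold_right Rmult 1 (map (fun a => / INR a) l).

Definition sumR (l : list R) : R := fold_right Rplus 0 l.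

Definition wdec (n k : nat) : list (list nat) := filter nonincb (tuples n k).

(* [t^j] theta_{n;k}(t) *)
Definition theta_coef (n k j : nat) : R :=
  sumR (map weight (filter (fun l => Nat.eqb (sigma l) j) (wdec n k))).

Definition theta1 (n k : nat) : R := sumR (map weight (wdec n k)).

(* P{S_{n,k} = j} *)
Definition PS (n k j : nat) : R := theta_coef n k j / theta1 n k.

(* P{k - S_{n,k} = l} (S_{n,k} is a nonnegative integer) *)
Definition PkminusS (n k l : nat) : R :=
  if Nat.leb l k then PS n k (k - l) else 0.

(* law of D_n = B_1 + ... + B_n, B_j independent Bernoulli(1/j):
   convolution of the laws *)
Fixpoint PD (n l : nat) : R :=
  match n with
  | O => if Nat.eqb l 0 then 1 else 0
  | S m =>
      (1 - / INR (S m)) * PD m l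
      + match l with O => 0 | S l' => / INR (S m) * PD m l' end
  end.

(* zeta_m({1}_r) = sum_{m >= l_1 > ... > l_r >= 1} prod 1/l_i ; = 1 for r = 0 *)
Definition zeta1 (m r : nat) : R :=
  sumR (map weight (filter decb (tuples m r))).

(* Main.v *)
Require Import Defs.
From Stdlib Require Import Reals Arith List.
From Stdlib Require Import Lia Lra.
From Coquelicot Require Coquelicot.
Import ListNotations.
Open Scope bool_scope.
Open Scope R_scope.

Definition xr (a : nat) : R := / INR a.

Fixpoint sumto (f : nat -> R) (m : nat) : R :=
  match m with O => 0 | S m' => sumto f m' + f (S m') end.

Fixpoint U (k a d : nat) {struct k} : R :=
  match k with
  | O => 0
  | S k' => match k' with
     | O => if Nat.eqb d 1 then xr a else 0
     | S _ => xr a * ((match d with O => 0 | S d' => sumto (fun h => U k' h d') (a - 1) end) + U k' a d)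
     end
  end.

Definition AA (n k d : nat) : R :=
  match k with O => if Nat.eqb d 0 then 1 else 0 | S _ => sumto (fun a => U k a d) n end.

Fixpoint dc (l : list nat) : nat :=
  match l with
  | [] => 0
  | x :: t => match t with [] => 1 | y :: _ => (if Nat.eqb x y then 0 else 1) + dc t end
  end.

Lemma sumR_app l1 l2 : sumR (l1 ++ l2) = sumR l1 + sumR l2.
Proof. induction l1; simpl; [ring| rewrite IHl1; ring]. Qed.

Lemma sumR_filter {A} (f : A -> R) p L :
  sumR (map f (filter p L)) = sumR (map (fun l => if p l then f l else 0) L).
Proof. induction L; simpl; auto. destruct (p a); simpl; rewrite IHL; ring. Qed.

Lemma sumR_flat_map {A B} (F : B -> R) (g : A -> list B) L :
  sumR (map F (flat_map g L)) = sumR (map (fun l => sumR (map F (g l))) L).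
Proof. induction L; simpl; auto. rewrite map_app, sumR_app, IHL. auto. Qed.

Lemma sumR_seq f n : sumR (map f (seq 1 n)) = sumto f n.
Proof. induction n; [reflexivity|]. rewrite seq_S, map_app, sumR_app, IHn. simpl. ring. Qed.

Lemma sumR_ext_in {A} (f g : A -> R) L :
  (forall x, In x L -> f x = g x) -> sumR (map f L) = sumR (map g L).
Proof. induction L; simpl; intros H; auto. rewrite H, IHL; auto. Qed.

Lemma sumR_scal {A} c (f : A -> R) L : sumR (map (fun l => c * f l) L) = c * sumR (map f L).
Proof. induction L; simpl; [ring|rewrite IHL; ring]. Qed.

Lemma sumR_plus {A} (f g : A -> R) L :
  sumR (map (fun l => f l + g l) L) = sumR (map f L) + sumR (map g L).
Proof. induction L; simpl; [ring|rewrite IHL; ring]. Qed.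

Lemma sumR_zero {A} (L : list A) : sumR (map (fun _ => 0) L) = 0.
Proof. induction L; simpl; [ring|rewrite IHL; ring]. Qed.

Lemma sumR_sumto {A} (F : nat -> A -> R) m L :
  sumR (map (fun l => sumto (fun h => F h l) m) L) = sumto (fun h => sumR (map (F h) L)) m.
Proof.
  induction m; simpl. apply sumR_zero.
  rewrite (sumR_plus (fun l => sumto (fun h => F h l) m) (F (S m))). rewrite IHm. auto.
Qed.

Lemma sumR_sumf {A} (F : nat -> A -> R) m L :
  sumR (map (fun l => sum_f_R0 (fun h => F h l) m) L) = sum_f_R0 (fun h => sumR (map (F h) L)) m.
Proof.
  induction m; simpl. auto.
  rewrite (sumR_plus (fun l => sum_f_R0 (fun h => F h l) m) (F (S m))). rewrite IHm. auto.
Qed.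

Lemma sumto_ext f g m : (forall h, (1 <= h <= m)%nat -> f h = g h) -> sumto f m = sumto g m.
Proof. induction m; simpl; intros H; auto. rewrite IHm, H; [auto|lia|]. intros; apply H; lia. Qed.

Lemma sumto_zero m : sumto (fun _ => 0) m = 0.
Proof. induction m; simpl; [auto| rewrite IHm; ring]. Qed.

Lemma sumto_ind (g : R) a n :
  sumto (fun b => if Nat.eqb b a then g else 0) n = if (1 <=? a)%nat && (a <=? n)%nat then g else 0.
Proof.
  induction n; cbn [sumto].
  - destruct a as [|a]; simpl; auto.
  - rewrite IHn. destruct (Nat.eqb_spec (S n) a).
    + subst. rewrite (proj2 (Nat.leb_nle (S n) n)) by lia.
      rewrite Nat.leb_refl. rewrite (proj2 (Nat.leb_le 1 (S n))) by lia. simpl. ring.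
    + destruct (Nat.leb_spec 1 a); simpl; [|ring].
      destruct (Nat.leb_spec a n); destruct (Nat.leb_spec a (S n)); try ring; lia.
Qed.

Lemma sumto_ind' (g : R) a n :
  sumto (fun b => if Nat.eqb a b then g else 0) n = if (1 <=? a)%nat && (a <=? n)%nat then g else 0.
Proof. rewrite <- sumto_ind. apply sumto_ext. intros. rewrite Nat.eqb_sym. auto. Qed.

Lemma sumf_ind0 (g : R) m M : (M < m)%nat ->
  sum_f_R0 (fun d => if Nat.eqb m d then g else 0) M = 0.
Proof.
  induction M; intros H; cbn [sum_f_R0].
  - destruct (Nat.eqb_spec m 0); [lia|auto].
  - rewrite IHM by lia. destruct (Nat.eqb_spec m (S M)); [lia|ring].
Qed.

Lemma sumf_ind (g : R) m N : (m <= N)%nat ->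
  sum_f_R0 (fun d => if Nat.eqb m d then g else 0) N = g.
Proof.
  induction N; intros H; cbn [sum_f_R0].
  - replace m with 0%nat by lia. simpl. auto.
  - destruct (Nat.eq_dec m (S N)).
    + subst. rewrite Nat.eqb_refl. rewrite sumf_ind0 by lia. ring.
    + rewrite IHN by lia. destruct (Nat.eqb_spec m (S N)); [lia|ring].
Qed.

Lemma tuples_S_sum (F : list nat -> R) n k :
  sumR (map F (tuples n (S k))) = sumR (map (fun l => sumto (fun a => F (a :: l)) n) (tuples n k)).
Proof.
  simpl. rewrite sumR_flat_map. apply sumR_ext_in. intros l _.
  rewrite map_map. apply sumR_seq.
Qed.

Lemma tuples_in n k l : In l (tuples n k) -> length l = k /\ Forall (fun a => 1 <= a <= n)%nat l.
Proof.
  revert l; induction k; simpl; intros l H.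
  - destruct H as [H|[]]; subst; simpl; auto.
  - apply in_flat_map in H. destruct H as [t [Ht Hl]]. apply in_map_iff in Hl.
    destruct Hl as [a [Ha Hs]]. subst. apply in_seq in Hs. apply IHk in Ht. destruct Ht.
    simpl. split; [auto| constructor; auto; lia].
Qed.

Lemma sigma_dc_cons x t : (Defs.sigma (x :: t) + dc (x :: t) = S (length t))%nat.
Proof.
  revert x; induction t; intros x; simpl; auto.
  specialize (IHt a). simpl in IHt.
  destruct (Nat.eqb x a); simpl; lia.
Qed.

Lemma sigma_dc l : (Defs.sigma l + dc l = length l)%nat.
Proof. destruct l; simpl; auto. apply sigma_dc_cons. Qed.

Lemma decb_eq l : decb l = nonincb l && Nat.eqb (Defs.sigma l) 0.
Proof.
  destruct l as [|x t]; auto. revert x; induction t; intros x; [reflexivity|].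
  replace (decb (x :: a :: t)) with (Nat.ltb a x && decb (a :: t)) by reflexivity.
  replace (nonincb (x :: a :: t)) with (Nat.leb a x && nonincb (a :: t)) by reflexivity.
  replace (Defs.sigma (x :: a :: t)) with ((if Nat.eqb x a then 1 else 0) + Defs.sigma (a :: t))%nat by reflexivity.
  rewrite IHt.
  destruct (Nat.ltb_spec a x); destruct (Nat.leb_spec a x); destruct (Nat.eqb_spec x a); simpl;
    try lia; auto; destruct (nonincb (a :: t)); auto.
Qed.

Definition Psi (a d : nat) (l : list nat) : R :=
  if nonincb l && Nat.eqb (hd 0%nat l) a && Nat.eqb (dc l) d then weight l else 0.
Definition Phi (d : nat) (l : list nat) : R :=
  if nonincb l && Nat.eqb (dc l) d then weight l else 0.
Definition Q (a d : nat) (l : list nat) : R :=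
  if nonincb (a :: l) && Nat.eqb (dc (a :: l)) d then weight (a :: l) else 0.

Lemma Psi_cons a d b l : Psi a d (b :: l) = if Nat.eqb b a then Q a d l else 0.
Proof.
  unfold Psi, Q. simpl hd. destruct (Nat.eqb_spec b a); subst.
  - rewrite ?Nat.eqb_refl. destruct (nonincb (a :: l)); simpl; auto.
  - destruct (nonincb (b :: l)); simpl; auto.
Qed.

Lemma weight_cons a l : weight (a :: l) = xr a * weight l.
Proof. reflexivity. Qed.

Lemma Q_nil a d : Q a d [] = if Nat.eqb d 1 then xr a else 0.
Proof. unfold Q. destruct d as [|[|d]]; simpl; auto. unfold weight, xr; simpl. ring. Qed.

Lemma Q_cons a d h t : (1 <= h)%nat ->
  Q a d (h :: t) = xr a * ((match d with O => 0 | S d' => sumto (fun h' => Psi h' d' (h :: t)) (a - 1) end)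
                          + Psi a d (h :: t)).
Proof.
  intros Hh. unfold Q.
  replace (nonincb (a :: h :: t)) with (Nat.leb h a && nonincb (h :: t)) by reflexivity.
  replace (dc (a :: h :: t)) with ((if Nat.eqb a h then 0 else 1) + dc (h :: t))%nat by reflexivity.
  rewrite weight_cons.
  assert (E : forall d', sumto (fun h' => Psi h' d' (h :: t)) (a - 1) =
     if (h <=? a - 1)%nat then (if nonincb (h :: t) && Nat.eqb (dc (h :: t)) d' then weight (h :: t) else 0) else 0).
  { intros d'. unfold Psi. simpl hd.
    transitivity (sumto (fun h' => if Nat.eqb h h' then
       (if nonincb (h :: t) && Nat.eqb (dc (h :: t)) d' then weight (h :: t) else 0) else 0) (a - 1)).
    { apply sumto_ext. intros h0 _.
      destruct (nonincb (h :: t)), (Nat.eqb h h0), (Nat.eqb (dc (h::t)) d'); simpl; auto. }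
    rewrite sumto_ind'. rewrite (proj2 (Nat.leb_le 1 h) Hh). simpl. auto. }
  unfold Psi at 2. simpl hd.
  assert (E0 : forall d', match d' with O => 0 | S d'' => sumto (fun h' => Psi h' d'' (h :: t)) (a - 1) end =
     match d' with O => 0 | S d'' => if (h <=? a - 1)%nat then (if nonincb (h :: t) && Nat.eqb (dc (h :: t)) d'' then weight (h :: t) else 0) else 0 end).
  { intros [|d'']; auto. }
  rewrite E0. clear E E0.
  remember (dc (h::t)) as D. remember (weight (h::t)) as W. remember (nonincb (h::t)) as NB.
  destruct (Nat.eqb_spec a h) as [<-|Hah];
    [rewrite Nat.eqb_refl | rewrite (proj2 (Nat.eqb_neq h a)) by lia];
  destruct d as [|d']; destruct NB; simpl;
  repeat match goal with |- context [Nat.eqb ?x ?y] => destruct (Nat.eqb_spec x y) end;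
  repeat match goal with |- context [Nat.leb ?x ?y] => destruct (Nat.leb_spec x y) end;
  simpl; try lia; try ring.
Qed.

Theorem Vd n k a d : (1 <= k)%nat ->
  sumR (map (Psi a d) (tuples n k)) = if (1 <=? a)%nat && (a <=? n)%nat then U k a d else 0.
Proof.
  revert a d. induction k as [|k IH]; intros a d Hk; [lia|].
  rewrite tuples_S_sum.
  rewrite (sumR_ext_in _ (fun l => if (1 <=? a)%nat && (a <=? n)%nat then Q a d l else 0)).
  2:{ intros l _. rewrite <- sumto_ind. apply sumto_ext. intros. apply Psi_cons. }
  destruct ((1 <=? a)%nat && (a <=? n)%nat) eqn:Ha; [| apply sumR_zero].
  apply Bool.andb_true_iff in Ha. destruct Ha as [Ha1 Ha2]. apply Nat.leb_le in Ha1, Ha2.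
  destruct k as [|k].
  - simpl. rewrite Q_nil. ring.
  - rewrite (sumR_ext_in _ (fun l => xr a * ((match d with O => 0 | S d' => sumto (fun h' => Psi h' d' l) (a - 1) end) + Psi a d l))).
    2:{ intros l Hl. apply tuples_in in Hl. destruct Hl as [Hl1 Hl2].
        destruct l as [|h t]; [simpl in Hl1; lia|]. inversion Hl2; subst. apply Q_cons. lia. }
    rewrite sumR_scal, sumR_plus. rewrite IH by lia.
    rewrite (proj2 (Nat.leb_le 1 a) Ha1), (proj2 (Nat.leb_le a n) Ha2). simpl andb.
    change (U (S (S k)) a d) with
      (xr a * ((match d with O => 0 | S d' => sumto (fun h => U (S k) h d') (a - 1) end) + U (S k) a d)).
    f_equal. f_equal. destruct d as [|d']. apply sumR_zero.
    rewrite (sumR_sumto (fun h' l => Psi h' d' l)). apply sumto_ext. intros h Hh.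
    rewrite IH by lia. rewrite (proj2 (Nat.leb_le 1 h)) by lia. rewrite (proj2 (Nat.leb_le h n)) by lia.
    auto.
Qed.

Theorem Phi_sum n k d : sumR (map (Phi d) (tuples n k)) = AA n k d.
Proof.
  destruct k as [|k].
  - simpl. unfold Phi. destruct d; simpl; unfold weight; simpl; ring.
  - rewrite (sumR_ext_in _ (fun l => sumto (fun a => Psi a d l) n)).
    + rewrite sumR_sumto. unfold AA. apply sumto_ext. intros a Ha. rewrite Vd by lia.
      rewrite (proj2 (Nat.leb_le 1 a)) by lia. rewrite (proj2 (Nat.leb_le a n)) by lia. auto.
    + intros l Hl. apply tuples_in in Hl. destruct Hl as [Hl1 Hl2].
      destruct l as [|h t]; [simpl in Hl1; lia|]. inversion Hl2; subst.
      transitivity (sumto (fun a => if Nat.eqb h a then Phi d (h :: t) else 0) n).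
      * rewrite sumto_ind'. rewrite (proj2 (Nat.leb_le 1 h)) by lia. rewrite (proj2 (Nat.leb_le h n)) by lia. auto.
      * apply sumto_ext. intros a _. unfold Psi, Phi. simpl hd.
        destruct (nonincb (h :: t)); simpl; destruct (Nat.eqb h a); auto.
Qed.

Theorem theta_coef_AA n k j : theta_coef n k j = if (j <=? k)%nat then AA n k (k - j) else 0.
Proof.
  unfold theta_coef, wdec. rewrite sumR_filter, sumR_filter.
  rewrite (sumR_ext_in _ (fun l => if (j <=? k)%nat then Phi (k - j) l else 0)).
  - destruct (j <=? k)%nat. apply Phi_sum. apply sumR_zero.
  - intros l Hl. apply tuples_in in Hl. destruct Hl as [Hl1 _].
    pose proof (sigma_dc l). unfold Phi.
    destruct (nonincb l); simpl; destruct (Nat.leb_spec j k);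
    destruct (Nat.eqb_spec (Defs.sigma l) j); destruct (Nat.eqb_spec (dc l) (k - j)); auto; lia.
Qed.

Theorem theta1_AA n k : theta1 n k = sum_f_R0 (fun d => AA n k d) k.
Proof.
  unfold theta1, wdec. rewrite sumR_filter.
  rewrite (sumR_ext_in _ (fun l => sum_f_R0 (fun d => Phi d l) k)).
  - rewrite sumR_sumf. apply sum_eq. intros. apply Phi_sum.
  - intros l Hl. apply tuples_in in Hl. destruct Hl as [Hl1 _]. pose proof (sigma_dc l).
    unfold Phi. destruct (nonincb l); simpl.
    + apply eq_sym, sumf_ind. lia.
    + clear. induction k; simpl; auto. rewrite <- IHk; ring.
Qed.

Theorem zeta1_AA m r : zeta1 m r = AA m r r.
Proof.
  unfold zeta1. rewrite sumR_filter.
  rewrite <- Phi_sum. apply sumR_ext_in. intros l Hl. apply tuples_in in Hl. destruct Hl as [Hl1 _].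
  pose proof (sigma_dc l). rewrite decb_eq. unfold Phi.
  destruct (nonincb l); simpl; auto.
  destruct (Nat.eqb_spec (Defs.sigma l) 0); destruct (Nat.eqb_spec (dc l) r); auto; lia.
Qed.

Lemma Un_cv_ev (u v : nat -> R) l N :
  (forall k, (k >= N)%nat -> u k = v k) -> Un_cv v l -> Un_cv u l.
Proof.
  intros H Hv eps He. destruct (Hv eps He) as [N1 HN1]. exists (max N N1).
  intros n Hn. rewrite H by lia. apply HN1. lia.
Qed.

Lemma Un_cv_const c : Un_cv (fun _ => c) c.
Proof. intros eps He. exists 0%nat. intros. unfold R_dist. rewrite Rminus_diag, Rabs_R0. auto. Qed.

Lemma Un_cv_div (u v : nat -> R) a b : Un_cv u a -> Un_cv v b -> b <> 0 ->
  Un_cv (fun n => u n / v n) (a / b).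
Proof.
  intros Hu Hv Hb. apply Coquelicot.Lim_seq.is_lim_seq_Reals.
  apply Coquelicot.Lim_seq.is_lim_seq_div'; auto; apply Coquelicot.Lim_seq.is_lim_seq_Reals; auto.
Qed.

Lemma Un_cv_bmult0 (u v : nat -> R) : Un_cv u 0 -> (forall n, Rabs (v n) <= 1) ->
  Un_cv (fun n => v n * u n) 0.
Proof.
  intros Hu Hv eps He. destruct (Hu eps He) as [N HN]. exists N. intros n Hn.
  specialize (HN n Hn). unfold R_dist in *. rewrite Rminus_0_r in *. rewrite Rabs_mult.
  specialize (Hv n). pose proof (Rabs_pos (v n)). pose proof (Rabs_pos (u n)). nra.
Qed.

Lemma Un_cv_sumf (F : nat -> nat -> R) (L : nat -> R) m :
  (forall d, (d <= m)%nat -> Un_cv (fun n => F n d) (L d)) ->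
  Un_cv (fun n => sum_f_R0 (fun d => F n d) m) (sum_f_R0 L m).
Proof.
  induction m; intros H; simpl. apply H; lia.
  apply CV_plus. apply IHm; intros; apply H; lia. apply H; lia.
Qed.

Lemma sumf_trunc (f : nat -> R) m N : (forall d, (m < d)%nat -> f d = 0) -> (m <= N)%nat ->
  sum_f_R0 f N = sum_f_R0 f m.
Proof.
  intros H. induction N; intros HN. replace m with 0%nat by lia. auto.
  destruct (Nat.eq_dec m (S N)). subst; auto. simpl. rewrite IHN by lia. rewrite H by lia. ring.
Qed.

Lemma contraction (b y : nat -> R) c Y : 0 < c <= 1/2 ->
  (forall k, b (S k) = c * (y k + b k)) -> Un_cv y Y -> Un_cv b (c * Y / (1 - c)).
Proof.
  intros Hc Hb Hy eps He.
  set (L := c * Y / (1 - c)).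
  assert (Hrec : forall k, b (S k) - L = c * (y k - Y) + c * (b k - L)).
  { intros k. rewrite Hb. unfold L. field. lra. }
  destruct (Hy (eps/2)) as [N1 HN1]; [lra|].
  assert (Hind : forall m, Rabs (b (N1 + m)%nat - L) <= c ^ m * Rabs (b N1 - L) + eps / 2).
  { induction m. rewrite Nat.add_0_r. simpl. pose proof (Rabs_pos (b N1 - L)). lra.
    replace (N1 + S m)%nat with (S (N1 + m)) by lia. rewrite Hrec.
    specialize (HN1 (N1 + m)%nat ltac:(lia)). unfold R_dist in HN1.
    eapply Rle_trans. apply Rabs_triang. rewrite !Rabs_mult. rewrite (Rabs_right c) by lra.
    simpl. pose proof (Rabs_pos (b N1 - L)). pose proof (pow_le c m ltac:(lra)). nra. }
  destruct (pow_lt_1_zero c ltac:(rewrite Rabs_right; lra) (eps / 2 / (Rabs (b N1 - L) + 1)))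
    as [M HM].
  { apply Rdiv_lt_0_compat. lra. pose proof (Rabs_pos (b N1 - L)). lra. }
  exists (N1 + M)%nat. intros n Hn. unfold R_dist.
  replace n with (N1 + (n - N1))%nat by lia.
  eapply Rle_lt_trans. apply Hind.
  specialize (HM (n - N1)%nat ltac:(lia)). rewrite Rabs_right in HM by (apply Rle_ge, pow_le; lra).
  pose proof (Rabs_pos (b N1 - L)).
  assert (c ^ (n - N1) * Rabs (b N1 - L) < eps / 2).
  { apply Rle_lt_trans with (c ^ (n - N1) * (Rabs (b N1 - L) + 1)).
    pose proof (pow_le c (n - N1) ltac:(lra)). nra.
    apply Rmult_lt_reg_r with (/ (Rabs (b N1 - L) + 1)). apply Rinv_0_lt_compat; lra.
    rewrite Rmult_assoc, Rinv_r by lra. rewrite Rmult_1_r. apply HM. }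
  lra.
Qed.

Lemma stolz0 (a b : nat -> R) N0 :
  (forall n, (n >= N0)%nat -> b n < b (S n)) ->
  (forall M, exists N, forall n, (n >= N)%nat -> M <= b n) ->
  Un_cv (fun n => (a (S n) - a n) / (b (S n) - b n)) 0 ->
  Un_cv (fun n => a n / b n) 0.
Proof.
  intros Hinc Hinf Hr eps He.
  destruct (Hr (eps / 4)) as [N1' HN1]; [lra|].
  set (N1 := max N0 N1').
  assert (Hd : forall n, (n >= N1)%nat -> Rabs (a (S n) - a n) <= eps / 4 * (b (S n) - b n)).
  { intros n Hn. specialize (HN1 n ltac:(unfold N1 in Hn; lia)). specialize (Hinc n ltac:(unfold N1 in Hn; lia)).
    unfold R_dist in HN1. rewrite Rminus_0_r in HN1. unfold Rdiv in HN1.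
    rewrite Rabs_mult, Rabs_inv in HN1 by lra. rewrite (Rabs_right (b (S n) - b n)) in HN1 by lra.
    apply Rmult_lt_compat_r with (r := b (S n) - b n) in HN1; [|lra].
    rewrite Rmult_assoc, Rinv_l in HN1 by lra. lra. }
  assert (Hm : forall m, Rabs (a (N1 + m)%nat - a N1) <= eps / 4 * (b (N1 + m)%nat - b N1)).
  { induction m. rewrite Nat.add_0_r, Rminus_diag, Rabs_R0. lra.
    replace (N1 + S m)%nat with (S (N1 + m)) by lia.
    specialize (Hd (N1 + m)%nat ltac:(lia)).
    replace (a (S (N1 + m)) - a N1) with ((a (S (N1 + m)) - a (N1 + m)%nat) + (a (N1 + m)%nat - a N1)) by ring.
    eapply Rle_trans. apply Rabs_triang. lra. }
  destruct (Hinf ((Rabs (a N1) + eps / 4 * Rabs (b N1)) * (4 / eps) + 1)) as [N2 HN2].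
  exists (max N1 N2). intros n Hn. unfold R_dist. rewrite Rminus_0_r.
  specialize (HN2 n ltac:(lia)).
  assert (Hpos : 0 < (Rabs (a N1) + eps / 4 * Rabs (b N1)) * (4 / eps) + 1).
  { pose proof (Rabs_pos (a N1)). pose proof (Rabs_pos (b N1)).
    assert (0 < 4 / eps) by (apply Rdiv_lt_0_compat; lra).
    assert (0 <= (Rabs (a N1) + eps/4*Rabs(b N1)) * (4/eps)) by
      (apply Rmult_le_pos; [apply Rplus_le_le_0_compat; [auto| apply Rmult_le_pos; lra]|lra]). lra. }
  assert (Hbn : 0 < b n) by lra.
  specialize (Hm (n - N1)%nat). replace (N1 + (n - N1))%nat with n in Hm by lia.
  unfold Rdiv. rewrite Rabs_mult, Rabs_inv by lra. rewrite (Rabs_right (b n)) by lra.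
  apply Rmult_lt_reg_r with (b n); [lra|]. rewrite Rmult_assoc, Rinv_l by lra. rewrite Rmult_1_r.
  assert (Rabs (a n) <= Rabs (a N1) + eps / 4 * (b n - b N1)).
  { replace (a n) with ((a n - a N1) + a N1) by ring. eapply Rle_trans. apply Rabs_triang. lra. }
  assert (- b N1 <= Rabs (b N1)) by (rewrite <- Rabs_Ropp; apply Rle_abs).
  assert ((Rabs (a N1) + eps / 4 * Rabs (b N1)) <= eps / 4 * b n).
  { assert (((Rabs (a N1) + eps / 4 * Rabs (b N1)) * (4 / eps)) * (eps / 4) <= b n * (eps / 4)).
    apply Rmult_le_compat_r; lra.
    replace (((Rabs (a N1) + eps / 4 * Rabs (b N1)) * (4 / eps)) * (eps / 4)) with
      (Rabs (a N1) + eps / 4 * Rabs (b N1)) in H1 by (field; lra). lra. }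
  nra.
Qed.

Lemma xr_ge0 a : 0 <= xr a.
Proof. unfold xr. destruct a. simpl INR; rewrite Rinv_0; lra. left; apply Rinv_0_lt_compat, lt_0_INR; lia. Qed.

Lemma xr_pos a : (1 <= a)%nat -> 0 < xr a.
Proof. intros. unfold xr. apply Rinv_0_lt_compat, lt_0_INR; lia. Qed.

Lemma xr_le1 a : xr a <= 1.
Proof. unfold xr. destruct a. simpl INR; rewrite Rinv_0; lra. rewrite <- Rinv_1. apply Rinv_le_contravar. lra.
  rewrite S_INR. pose proof (pos_INR a). lra. Qed.

Lemma U_S k a d : U (S k) a d = xr a * ((match d with O => 0 | S d' => AA (a - 1) k d' end) + U k a d).
Proof.
  destruct k as [|k].
  - simpl. destruct d as [|[|d]]; simpl; ring.
  - reflexivity.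
Qed.

Lemma AA_S n k d : AA (S n) k d = AA n k d + U k (S n) d.
Proof. destruct k; simpl; [ring|auto]. Qed.

Lemma AA_0n k d : AA 0 k d = if Nat.eqb k 0 && Nat.eqb d 0 then 1 else 0.
Proof. destruct k; destruct d; simpl; auto. Qed.

Lemma AA_ge0_of n k d : (forall a, 0 <= U k a d) -> 0 <= AA n k d.
Proof.
  intros H. induction n. rewrite AA_0n. destruct (_ && _)%bool; lra.
  rewrite AA_S. specialize (H (S n)). lra.
Qed.

Lemma U_ge0 k a d : 0 <= U k a d.
Proof.
  revert a d. induction k; intros a d. simpl; lra.
  rewrite U_S. apply Rmult_le_pos. apply xr_ge0.
  apply Rplus_le_le_0_compat; auto. destruct d; [lra|]. apply AA_ge0_of. auto.
Qed.

Lemma AA_ge0 n k d : 0 <= AA n k d.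
Proof. apply AA_ge0_of. intros; apply U_ge0. Qed.

Lemma AA_zero_of n k d : (forall a, U k a d = 0) -> (k = 0%nat -> d <> 0%nat) -> AA n k d = 0.
Proof.
  intros H Hk. induction n. rewrite AA_0n. destruct k; destruct d; simpl; auto. exfalso; apply Hk; auto.
  rewrite AA_S, IHn, H. ring.
Qed.

Lemma U_big k a d : (k < d)%nat -> U k a d = 0.
Proof.
  revert a d. induction k; intros a d Hd. auto.
  rewrite U_S. rewrite IHk by lia. destruct d as [|d']; [lia|].
  rewrite AA_zero_of. ring. intros; apply IHk; lia. lia.
Qed.

Lemma AA_big n k d : (k < d)%nat -> AA n k d = 0.
Proof. intros. apply AA_zero_of. intros; apply U_big; auto. lia. Qed.

Lemma AA_gt_n_of n k d : (forall a, (1 <= a)%nat -> (a < d)%nat -> U k a d = 0) -> (n < d)%nat -> AA n k d = 0.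
Proof.
  intros H. induction n; intros Hn. rewrite AA_0n. destruct k; destruct d; simpl; auto; lia.
  rewrite AA_S, IHn, H by lia. ring.
Qed.

Lemma U_gt_a k a d : (1 <= a)%nat -> (a < d)%nat -> U k a d = 0.
Proof.
  revert a d. induction k; intros a d Ha Hd. auto.
  rewrite U_S. rewrite IHk by lia. destruct d as [|d']; [lia|].
  rewrite AA_gt_n_of. ring. intros; apply IHk; lia. lia.
Qed.

Lemma AA_gt_n n k d : (n < d)%nat -> AA n k d = 0.
Proof. intros. apply AA_gt_n_of; auto. intros; apply U_gt_a; auto. Qed.

Lemma AA_mono n m k d : (n <= m)%nat -> AA n k d <= AA m k d.
Proof.
  intros H. induction H. lra. rewrite AA_S. pose proof (U_ge0 k (S m) d). lra.
Qed.

Lemma INR_PD m l : INR (S m) * PD (S m) l = match l with O => 0 | S r => AA m r r end.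
Proof.
  revert l. induction m; intros l.
  - simpl PD. destruct l as [|[|l]]; simpl; rewrite ?Rinv_1; try ring.
  - change (PD (S (S m)) l) with ((1 - / INR (S (S m))) * PD (S m) l
      + match l with O => 0 | S l' => / INR (S (S m)) * PD (S m) l' end).
    assert (Hm : INR (S (S m)) = INR (S m) + 1) by (rewrite S_INR; ring).
    assert (Hm0 : 0 < INR (S m)) by (apply lt_0_INR; lia).
    destruct l as [|r].
    + specialize (IHm 0%nat). simpl in IHm.
      replace (INR (S (S m)) * ((1 - / INR (S (S m))) * PD (S m) 0 + 0)) with (INR (S m) * PD (S m) 0).
      auto. rewrite Hm. field. lra.
    + rewrite AA_S. pose proof (IHm (S r)) as H1. pose proof (IHm r) as H2.
      replace (INR (S (S m)) * ((1 - / INR (S (S m))) * PD (S m) (S r) + / INR (S (S m)) * PD (S m) r))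
        with (INR (S m) * PD (S m) (S r) + PD (S m) r) by (rewrite Hm; field; lra).
      rewrite H1.
      replace (PD (S m) r) with ((INR (S m) * PD (S m) r) / INR (S m)) by (field; lra).
      rewrite H2. destruct r as [|r']. simpl. unfold Rdiv; ring.
      rewrite U_S. rewrite U_big by lia. simpl (S m - 1)%nat. rewrite Nat.sub_0_r.
      unfold xr, Rdiv. ring.
Qed.

Lemma law n l : (1 <= n)%nat -> (1 <= l <= n)%nat -> PD n l = zeta1 (n - 1) (l - 1) / INR n.
Proof.
  intros Hn Hl. destruct n as [|m]; [lia|]. destruct l as [|r]; [lia|].
  rewrite zeta1_AA. simpl (S m - 1)%nat. simpl (S r - 1)%nat. rewrite !Nat.sub_0_r.
  replace (AA m r r) with (INR (S m) * PD (S m) (S r)) by (rewrite INR_PD; reflexivity). field. apply not_0_INR. lia.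
Qed.

Lemma xr1 : xr 1 = 1.
Proof. unfold xr. simpl INR. apply Rinv_1. Qed.

Lemma U_1 k d : U (S k) 1 d = if Nat.eqb d 1 then 1 else 0.
Proof.
  induction k.
  - simpl. rewrite xr1. destruct (Nat.eqb d 1); auto.
  - rewrite U_S, IHk, xr1. destruct d as [|d']. simpl; ring.
    simpl (1 - 1)%nat. rewrite AA_0n. simpl. ring.
Qed.

Lemma INR_PD1 d : INR 1 * PD 1 d = if Nat.eqb d 1 then 1 else 0.
Proof. rewrite INR_PD. destruct d as [|[|r]]; simpl; auto. Qed.

Lemma partI_AA m d : Un_cv (fun k => AA (S m) k d) (INR (S m) * PD (S m) d).
Proof.
  revert d. induction m; intros d.
  - rewrite INR_PD1. apply Un_cv_ev with (v := fun _ => if Nat.eqb d 1 then 1 else 0) (N := 1%nat).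
    intros k Hk. destruct k as [|k]; [lia|]. rewrite AA_S, U_1, AA_0n. simpl. ring.
    apply Un_cv_const.
  - set (c := xr (S (S m))).
    set (Y := match d with O => 0 | S d' => INR (S m) * PD (S m) d' end).
    assert (Hc : 0 < c <= 1/2).
    { unfold c, xr. split. apply Rinv_0_lt_compat, lt_0_INR; lia.
      rewrite !S_INR. pose proof (pos_INR m). rewrite <- (Rinv_inv 2) at 1. unfold Rdiv. rewrite Rmult_1_l.
      apply Rinv_le_contravar; lra. }
    assert (Hlim : INR (S (S m)) * PD (S (S m)) d = INR (S m) * PD (S m) d + c * Y / (1 - c)).
    { change (PD (S (S m)) d) with ((1 - / INR (S (S m))) * PD (S m) d
      + match d with O => 0 | S l' => / INR (S (S m)) * PD (S m) l' end).
      unfold Y, c, xr. assert (0 < INR (S m)) by (apply lt_0_INR; lia).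
      rewrite (S_INR (S m)). destruct d; field; split; lra. }
    rewrite Hlim.
    apply Un_cv_ev with (N := 0%nat) (v := fun k => AA (S m) k d + U k (S (S m)) d).
    { intros; apply AA_S. }
    apply CV_plus. apply IHm.
    apply contraction with (y := fun k => match d with O => 0 | S d' => AA (S m) k d' end); auto.
    + intros k. rewrite U_S. replace (S (S m) - 1)%nat with (S m) by lia. auto.
    + unfold Y. destruct d. apply Un_cv_const. apply IHm.
Qed.

Lemma PD_sum n N : (n <= N)%nat -> sum_f_R0 (PD n) N = 1.
Proof.
  revert N. induction n; intros N HN.
  - rewrite (sum_eq _ (fun d => if Nat.eqb 0 d then 1 else 0)). apply sumf_ind; lia.
    intros i _. simpl. rewrite Nat.eqb_sym. auto.
  - destruct N as [|N']; [lia|].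
    set (c := / INR (S n)).
    rewrite (sum_eq _ (fun d => PD n d * (1 - c) + (match d with O => 0 | S l' => c * PD n l' end))).
    2:{ intros i _. change (PD (S n) i) with ((1 - / INR (S n)) * PD n i
      + match i with O => 0 | S l' => / INR (S n) * PD n l' end). unfold c. destruct i; ring. }
    rewrite sum_plus, <- scal_sum, IHn by lia.
    rewrite decomp_sum by lia. simpl pred.
    rewrite (sum_eq _ (fun i => PD n i * c)) by (intros; ring). rewrite <- scal_sum, IHn by lia. ring.
Qed.

Lemma theta1_lim m : Un_cv (fun k => theta1 (S m) k) (INR (S m)).
Proof.
  apply Un_cv_ev with (N := S m) (v := fun k => sum_f_R0 (fun d => AA (S m) k d) (S m)).
  { intros k Hk. rewrite theta1_AA. apply sumf_trunc; auto. intros; apply AA_gt_n; auto. }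
  replace (INR (S m)) with (sum_f_R0 (fun d => INR (S m) * PD (S m) d) (S m)).
  apply Un_cv_sumf. intros; apply partI_AA.
  rewrite (sum_eq _ (fun d => PD (S m) d * INR (S m))) by (intros; ring).
  rewrite <- scal_sum, PD_sum by lia. ring.
Qed.

Lemma partI n l : (1 <= n)%nat -> Un_cv (fun k => PkminusS n k l) (PD n l).
Proof.
  intros Hn. destruct n as [|m]; [lia|].
  apply Un_cv_ev with (N := l) (v := fun k => AA (S m) k l / theta1 (S m) k).
  { intros k Hk. unfold PkminusS, PS. rewrite (proj2 (Nat.leb_le l k)) by lia.
    rewrite theta_coef_AA. rewrite (proj2 (Nat.leb_le (k - l) k)) by lia.
    replace (k - (k - l))%nat with l by lia. auto. }
  replace (PD (S m) l) with (INR (S m) * PD (S m) l / INR (S m)).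
  apply Un_cv_div. apply partI_AA. apply theta1_lim. apply not_0_INR; lia.
  field. apply not_0_INR; lia.
Qed.

Lemma harm_step n p : (1 <= n)%nat -> sumto xr (n + p) >= sumto xr n + INR p / INR (n + p).
Proof.
  intros Hn. induction p.
  - rewrite Nat.add_0_r. simpl INR. unfold Rdiv. rewrite Rmult_0_l. lra.
  - replace (n + S p)%nat with (S (n + p)) by lia. cbn [sumto].
    unfold xr. rewrite S_INR. rewrite S_INR. rewrite plus_INR in *.
    assert (Ha : 1 <= INR n) by (apply (le_INR 1); lia).
    pose proof (pos_INR p).
    assert (INR p / (INR n + INR p) >= INR p / (INR n + INR p + 1)).
    { unfold Rdiv. apply Rle_ge, Rmult_le_compat_l; auto. apply Rinv_le_contravar; lra. }
    replace ((INR p + 1) / (INR n + INR p + 1)) with (INR p / (INR n + INR p + 1) + / (INR n + INR p + 1))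
      by (field; lra).
    change (fun a : nat => / INR a) with xr. lra.
Qed.

Lemma sumto_mono_xr n n' : (n <= n')%nat -> sumto xr n <= sumto xr n'.
Proof. intros H. induction H. lra. cbn [sumto]. pose proof (xr_ge0 (S m)). lra. Qed.

Lemma harm_pow m : sumto xr (2 ^ m)%nat >= INR m / 2.
Proof.
  induction m.
  - simpl. rewrite xr1. lra.
  - replace (2 ^ S m)%nat with (2 ^ m + 2 ^ m)%nat by (simpl; lia).
    assert (Hp : (1 <= 2 ^ m)%nat) by (pose proof (Nat.pow_nonzero 2 m); lia).
    pose proof (harm_step (2 ^ m) (2 ^ m) Hp).
    replace (INR (2 ^ m) / INR (2 ^ m + 2 ^ m)) with (1/2) in H.
    rewrite S_INR. lra.
    rewrite plus_INR. assert (0 < INR (2 ^ m)) by (apply lt_0_INR; lia). field. lra.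
Qed.

Lemma harm_div M : exists N, forall n, (n >= N)%nat -> M <= sumto xr n.
Proof.
  destruct (INR_unbounded (2 * M)) as [m Hm]. exists (2 ^ m)%nat. intros n Hn.
  pose proof (harm_pow m). pose proof (sumto_mono_xr _ _ Hn). lra.
Qed.

Lemma dE K n : U (S K) (S n) (S K) = xr (S n) * AA n K K.
Proof. rewrite U_S, U_big by lia. replace (S n - 1)%nat with n by lia. ring. Qed.

Lemma E_pos K n : (K <= n)%nat -> 0 < AA n K K.
Proof.
  revert n. induction K; intros n Hn. simpl. lra.
  destruct n as [|n']; [lia|]. rewrite AA_S, dE.
  pose proof (AA_ge0 n' (S K) (S K)). pose proof (xr_pos (S n') ltac:(lia)).
  pose proof (IHK n' ltac:(lia)). nra.
Qed.

Lemma CV_plus0 u v : Un_cv u 0 -> Un_cv v 0 -> Un_cv (fun n => u n + v n) 0.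
Proof. intros H1 H2. pose proof (CV_plus _ _ _ _ H1 H2). rewrite Rplus_0_r in H. exact H. Qed.

Lemma Un_cv_zero : Un_cv (fun _ => 0) 0.
Proof. apply Un_cv_const. Qed.

Lemma b_unbounded K : forall M, exists N, forall n, (n >= N)%nat -> M <= AA n (S K) (S K).
Proof.
  intros M. set (c0 := AA K K K). assert (Hc0 : 0 < c0) by (apply E_pos; lia).
  assert (Hp : forall p, AA (K + p) (S K) (S K) >= c0 * (sumto xr (K + p) - sumto xr K)).
  { induction p. rewrite Nat.add_0_r. pose proof (AA_ge0 K (S K) (S K)). lra.
    replace (K + S p)%nat with (S (K + p)) by lia. rewrite AA_S, dE. cbn [sumto].
    pose proof (AA_mono K (K + p) K K ltac:(lia)). pose proof (xr_ge0 (S (K + p))). fold c0 in H. nra. }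
  destruct (harm_div (M / c0 + sumto xr K)) as [N HN]. exists (max N K). intros n Hn.
  specialize (HN n ltac:(lia)). specialize (Hp (n - K)%nat). replace (K + (n - K))%nat with n in Hp by lia.
  assert (c0 * (M / c0) = M) by (field; lra).
  assert (c0 * (sumto xr n - sumto xr K) >= c0 * (M / c0)) by (apply Rle_ge, Rmult_le_compat_l; lra).
  lra.
Qed.

Lemma ratio K : forall j d, (j <= K)%nat -> (j <> K \/ d <> K) ->
  Un_cv (fun n => AA n j d / AA n K K) 0.
Proof.
  induction K; intros j d Hj Hjd.
  - replace j with 0%nat in * by lia. destruct Hjd as [|Hd]; [lia|].
    apply Un_cv_ev with (N := 0%nat) (v := fun _ => 0); [|apply Un_cv_zero].
    intros. rewrite AA_big by lia. unfold Rdiv; ring.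
  - assert (Inner : forall j', (j' <= S K)%nat -> forall d', (j' <> S K \/ d' <> S K) ->
       Un_cv (fun n => U j' (S n) d' / (xr (S n) * AA n K K)) 0).
    { induction j'; intros Hj' d' Hjd'.
      - apply Un_cv_ev with (N := 0%nat) (v := fun _ => 0); [|apply Un_cv_zero].
        intros. simpl. unfold Rdiv; ring.
      - apply Un_cv_ev with (N := K) (v := fun n => (match d' with O => 0 | S d'' => AA n j' d'' end) / AA n K K
             + xr (S n) * (U j' (S n) d' / (xr (S n) * AA n K K))).
        { intros n Hn. rewrite U_S. replace (S n - 1)%nat with n by lia.
          pose proof (E_pos K n Hn). pose proof (xr_pos (S n) ltac:(lia)).
          destruct d'; field; lra. }
        apply CV_plus0.
        + destruct d' as [|d''].
          * apply Un_cv_ev with (N := 0%nat) (v := fun _ => 0); [|apply Un_cv_zero].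
            intros. unfold Rdiv; ring.
          * apply IHK; lia.
        + apply Un_cv_bmult0. apply IHj'; lia.
          intros n. rewrite Rabs_right by (apply Rle_ge, xr_ge0). apply xr_le1. }
    apply stolz0 with (N0 := K).
    + intros n Hn. rewrite AA_S, dE. pose proof (E_pos K n Hn). pose proof (xr_pos (S n) ltac:(lia)).
      nra.
    + apply b_unbounded.
    + apply Un_cv_ev with (N := 0%nat) (v := fun n => U j (S n) d / (xr (S n) * AA n K K)).
      { intros n _. rewrite !AA_S, dE. f_equal; ring. }
      apply Inner; auto.
Qed.

Lemma partII k j : (1 <= k)%nat -> Un_cv (fun n => PS n k j) (if Nat.eqb j 0 then 1 else 0).
Proof.
  intros Hk.
  assert (HT : Un_cv (fun n => theta1 n k / AA n k k) 1).
  { apply Un_cv_ev with (N := k) (v := fun n => sum_f_R0 (fun d => AA n k d / AA n k k) k).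
    { intros n Hn. rewrite theta1_AA. unfold Rdiv. rewrite Rmult_comm, scal_sum. auto. }
    rewrite <- (sumf_ind 1 k k) by lia. apply Un_cv_sumf. intros d Hd.
    destruct (Nat.eqb_spec k d) as [Hkd|Hkd].
    - subst. apply Un_cv_ev with (N := d) (v := fun _ => 1); [|apply Un_cv_const].
      intros n Hn. pose proof (E_pos d n Hn). field. lra.
    - apply ratio; lia. }
  assert (HC : Un_cv (fun n => theta_coef n k j / AA n k k) (if Nat.eqb j 0 then 1 else 0)).
  { destruct (Nat.leb_spec j k) as [Hjk|Hjk].
    - destruct (Nat.eqb_spec j 0) as [Hj0|Hj0].
      + subst. apply Un_cv_ev with (N := k) (v := fun _ => 1); [|apply Un_cv_const].
        intros n Hn. rewrite theta_coef_AA. simpl. rewrite Nat.sub_0_r. pose proof (E_pos k n Hn). field. lra.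
      + apply Un_cv_ev with (N := 0%nat) (v := fun n => AA n k (k - j) / AA n k k).
        { intros n _. rewrite theta_coef_AA. rewrite (proj2 (Nat.leb_le j k)) by lia. auto. }
        apply ratio; lia.
    - destruct (Nat.eqb_spec j 0) as [Hj0|Hj0]; [lia|].
      apply Un_cv_ev with (N := 0%nat) (v := fun _ => 0); [|apply Un_cv_zero].
      intros n _. rewrite theta_coef_AA. rewrite (proj2 (Nat.leb_nle j k)) by lia. unfold Rdiv; ring. }
  pose proof (Un_cv_div _ _ _ _ HC HT ltac:(lra)) as H.
  replace ((if Nat.eqb j 0 then 1 else 0) / 1) with (if Nat.eqb j 0 then 1 else 0) in H by field.
  apply Un_cv_ev with (N := k) (v := fun n => (theta_coef n k j / AA n k k) / (theta1 n k / AA n k k)); auto.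
  intros n Hn. unfold PS. pose proof (E_pos k n Hn).
  destruct (Req_dec (theta1 n k) 0) as [Ht0|Ht0].
  - rewrite Ht0. unfold Rdiv. rewrite Rmult_0_l, !Rinv_0. ring.
  - field. lra.
Qed.


Theorem mainTheorem14 :
  (forall n : nat, (1 <= n)%nat ->
     (* (i) k - S_{n,k} -> D_n in distribution (integer-valued: pmf convergence) *)
     (forall l : nat, Un_cv (fun k => PkminusS n k l) (PD n l)) /\
     (* law of D_n *)
     (forall l : nat, (1 <= l <= n)%nat ->
        PD n l = zeta1 (n - 1) (l - 1) / INR n)) /\
  (* (ii) S_{n,k} -> 0 in distribution as n -> oo *)
  (forall k : nat, (1 <= k)%nat ->
     forall j : nat, Un_cv (fun n => PS n k j) (if Nat.eqb j 0 then 1 else 0)).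
Proof.
  split.
  - intros n Hn. split.
    + intros l. apply partI; auto.
    + intros l Hl. apply law; auto.
  - intros k Hk j. apply partII; auto.
Qed.
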